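(* Consider a repeater chain in the model described in the context with $N+1$ nodes (hence $N$ edges) and elementary-link fidelity $F$ with $\tfrac14<F<1$. Let $Q^*\approx0.110028$ be the unique solution in $[0,\tfrac12]$ of $h(Q)=\tfrac12$, where $h(Q)=-Q\log_2Q-(1-Q)\log_2(1-Q)$, and let $$N^*=\frac{\log(1-2Q^* )}{\log\left(\frac{4F-1}{3}\right)}.$$ Then for every $N\ge N^*$ the secret-key rate of the chain is $\mathrm{SKR}=0$.
   Context: Repeater-chain model (swap-ASAP, synchronized attempts), with arbitrary edge lengths and memory coherence time $T$ at the repeater nodes. Edge $j$ connects nodes $j$ and $j+1$ and has length $l_j\ge0$ (km). Entanglement generation proceeds in synchronized rounds of duration $t_{\mathrm{att}}=\frac1c\max_jl_j$, $c=200{,}000$ km/s. In each round, each edge not yet successful attempts, succeeding independently with probability $p_j=10^{-\alpha l_j/10}$, $\alpha=0.2\ \mathrm{km}^{-1}$; the number of rounds $X_j$ until edge $j$ succeeds is geometric on $\{1,2,\dots\}$ with parameter $p_j$, independently across edges. Edge $j$ completes at time $t_j=t_{\mathrm{att}}X_j$, and the chain completes at $T_{\mathrm{done}}=t_{\mathrm{att}}\max_jX_j$; the entangling rate is $R=1/\mathbb E[T_{\mathrm{done}}]$. Each successful edge produces the two-qubit Werner state $W_{w_0}=w_0|\phi^+\rangle\langle\phi^+|+(1-w_0)\mathbb 1/4$ with $w_0=(4F-1)/3$. Each repeater node (every non-end node) performs entanglement swapping as soon as both of its links exist; meanwhile a stored qubit $k$ held for time $t$ in a memory with coherence time $T$ undergoes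 $\rho\mapsto e^{-t/T}\rho+(1-e^{-t/T})\frac{\mathbb 1_2}{2}\otimes\mathrm{Tr}_k\rho$; end nodes measure immediately and suffer no memory noise. Consequently, given the completion times, the end-to-end state is the Werner state with parameter $w_{e2e}=w_0^{N}\prod_{i}e^{-|t_i-t_{i-1}|/T}$, the product over repeater nodes $i$ (node $i$ sitting between edges $i-1$ and $i$); the delivered state is the Werner state with parameter $\mathbb E[w_{e2e}]$. Its quantum bit error rates are $Q_X=Q_Z=(1-\mathbb E[w_{e2e}])/2$, the secret-key fraction is $\mathrm{SKF}=\max(0,1-h(Q_X)-h(Q_Z))$, and the secret-key rate is $\mathrm{SKR}=R\cdot\mathrm{SKF}$. *)

(* Defs.v *)
From Stdlib Require Import Reals List Lra.
From Coquelicot Require Import Coquelicot.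
Open Scope R_scope.

Definition c_light : R := 200000.          (* km/s *)
Definition alpha_att : R := 2 / 10.         (* km^-1 *)

Definition p_edge (l : R) : R := Rpower 10 (- alpha_att * l / 10).

(** max_{j < n} l j  (lengths are >= 0, so starting at 0 is harmless) *)
Fixpoint max_len (l : nat -> R) (n : nat) : R :=
  match n with O => 0 | S k => Rmax (max_len l k) (l k) end.

Definition t_att (N : nat) (l : nat -> R) : R := / c_light * max_len l N.

(** Expectation of g (X_0, ..., X_{n-1}) where the X_j are independent
    geometric variables on {1,2,...} with parameters ps_j:
    P(X_j = k+1) = p_j (1-p_j)^k.  Iterated expectation (series). *)
Fixpoint E_geo (ps : list R) (g : list nat -> R) : R :=
  match ps with
  | nil => g nil
  | p :: ps' =>
      Series (fun k => p * (1 - p) ^ k * E_geo ps' (fun xs => g (S k :: xs)))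
  end.

Definition edge_probs (N : nat) (l : nat -> R) : list R :=
  map (fun j => p_edge (l j)) (seq 0 N).

Fixpoint prodR (f : nat -> R) (n : nat) : R :=
  match n with O => 1 | S k => prodR f k * f k end.

Definition w0_of (F : R) : R := (4 * F - 1) / 3.

(** end-to-end Werner parameter given X = (X_0,...,X_{N-1}):
    w0^N * prod_{repeater nodes i = 1..N-1} exp(-|t_i - t_{i-1}|/T),
    with t_j = t_att * X_j *)
Definition w_e2e (N : nat) (l : nat -> R) (T F : R) (X : list nat) : R :=
  w0_of F ^ N *
  prodR (fun i => exp (- Rabs (t_att N l * INR (nth (S i) X 0%nat)
                              - t_att N l * INR (nth i X 0%nat)) / T))
        (N - 1).

Definition T_done (N : nat) (l : nat -> R) (X : list nat) : R :=
  t_att N l * INR (fold_right Nat.max 0%nat X).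

Definition rate (N : nat) (l : nat -> R) : R :=
  / E_geo (edge_probs N l) (T_done N l).

Definition Ew_e2e (N : nat) (l : nat -> R) (T F : R) : R :=
  E_geo (edge_probs N l) (w_e2e N l T F).

Definition log2 (x : R) : R := ln x / ln 2.
Definition h2 (Q : R) : R := - Q * log2 Q - (1 - Q) * log2 (1 - Q).

(** QBER Q_X = Q_Z = (1 - E[w_e2e]) / 2 *)
Definition QBER (N : nat) (l : nat -> R) (T F : R) : R :=
  (1 - Ew_e2e N l T F) / 2.

Definition SKF (N : nat) (l : nat -> R) (T F : R) : R :=
  Rmax 0 (1 - h2 (QBER N l T F) - h2 (QBER N l T F)).

Definition SKR (N : nat) (l : nat -> R) (T F : R) : R :=
  rate N l * SKF N l T F.

(* Main.v *)
Require Import Defs.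
From Stdlib Require Import Reals Lra Lia List.
From Coquelicot Require Import Coquelicot.
Open Scope R_scope.

Lemma Series_zero : Series (fun _ => 0) = 0.
Proof.
  rewrite <- (Series_ext (fun n => 0 * 1)) by (intros; ring).
  rewrite Series_scal_l; ring.
Qed.

Lemma E_geo_bound : forall ps, (forall p, In p ps -> 0 < p <= 1) ->
  forall g b, (forall xs, 0 <= g xs <= b) -> 0 <= E_geo ps g <= b.
Proof.
  induction ps as [|p ps IH]; intros Hp g b Hg; simpl.
  - apply Hg.
  - assert (Hp0 : 0 < p <= 1) by (apply Hp; left; reflexivity).
    assert (IH' : forall k, 0 <= E_geo ps (fun xs => g (S k :: xs)) <= b).
    { intro k; apply IH; [intros q Hq; apply Hp; right; exact Hq| intros; apply Hg]. }
    assert (Hgeo : is_series (fun k => b * (p * (1 - p) ^ k)) b).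
    { assert (Hq : Rabs (1 - p) < 1) by (rewrite Rabs_pos_eq; lra).
      pose proof (is_series_scal_l b _ _ (is_series_scal_l p _ _ (is_series_geom (1-p) Hq))) as H1.
      unfold scal in H1; simpl in H1; unfold mult in H1; simpl in H1.
      replace (b * (p * / (1 - (1 - p)))) with b in H1 by (field; lra). exact H1. }
    assert (Hb0 : 0 <= b) by (destruct (Hg nil); lra).
    assert (Hterm : forall k, 0 <= p * (1 - p) ^ k * E_geo ps (fun xs => g (S k :: xs))
                             <= b * (p * (1 - p) ^ k)).
    { intro k. destruct (IH' k). assert (0 <= (1-p)^k) by (apply pow_le; lra).
      split. apply Rmult_le_pos; [apply Rmult_le_pos|]; lra.
      rewrite (Rmult_comm b). apply Rmult_le_compat_l; [apply Rmult_le_pos|]; lra. }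
    split.
    + rewrite <- Series_zero. apply Series_le.
      * intro k; destruct (Hterm k); lra.
      * apply (@ex_series_le R_AbsRing R_CompleteNormedModule) with (b := fun k => b * (p * (1 - p) ^ k)).
        -- intro k. rewrite Rabs_pos_eq; destruct (Hterm k); lra.
        -- eexists; exact Hgeo.
    + rewrite <- (is_series_unique _ _ Hgeo). apply Series_le.
      * exact Hterm.
      * eexists; exact Hgeo.
Qed.

Lemma prodR_bound : forall f n, (forall i, 0 <= f i <= 1) -> 0 <= prodR f n <= 1.
Proof.
  intros f n Hf; induction n; simpl; [lra|].
  destruct (Hf n); destruct IHn; split.
  apply Rmult_le_pos; lra.
  replace 1 with (1*1) by ring. apply Rmult_le_compat; lra.
Qed.

Lemma h2_half : h2 (1/2) = 1.
Proof.
  unfold h2, log2. replace (1 - 1/2) with (/2) by field.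
  replace (1/2) with (/2) by field. rewrite ln_Rinv by lra.
  assert (ln 2 <> 0). { pose proof (ln_increasing 1 2); rewrite ln_1 in H; lra. }
  field; auto.
Qed.

Lemma h2_zero : h2 0 = 0.
Proof. unfold h2, log2. rewrite Rminus_0_r, ln_1. unfold Rdiv; ring. Qed.

Lemma h2_incr : forall x y, 0 < x -> x < y -> y < 1/2 -> h2 x < h2 y.
Proof.
  intros x y Hx Hxy Hy.
  apply (incr_function h2 (Finite 0) (Finite (1/2)) (fun q => (ln (1 - q) - ln q) / ln 2));
    simpl; try lra.
  - intros q H1 H2. unfold h2, log2. auto_derive.
    + repeat split; lra.
    + assert (ln 2 <> 0). { pose proof (ln_increasing 1 2); rewrite ln_1 in H; lra. }
      replace (1 + - q) with (1 - q) by ring. field. repeat split; lra.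
  - intros q H1 H2. apply Rdiv_lt_0_compat.
    + assert (ln q < ln (1 - q)) by (apply ln_increasing; lra). lra.
    + pose proof (ln_increasing 1 2); rewrite ln_1 in H; lra.
Qed.

Theorem mainTheorem9 :
  forall (N : nat) (l : nat -> R) (T F Qstar : R),
    (forall j : nat, (j < N)%nat -> 0 <= l j) ->
    0 < T ->
    1 / 4 < F < 1 ->
    0 <= Qstar <= 1 / 2 ->
    h2 Qstar = 1 / 2 ->
    ln (1 - 2 * Qstar) / ln ((4 * F - 1) / 3) <= INR N ->
    SKR N l T F = 0.
Proof.
  intros N l T F Qs Hl HT HF HQ Hh HN.
  set (w0 := (4 * F - 1) / 3) in *.
  assert (Hw0 : 0 < w0 < 1) by (unfold w0; lra).
  assert (Hlw : ln w0 < 0) by (rewrite <- ln_1; apply ln_increasing; lra).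
  assert (HQ0 : Qs <> 0) by (intro E; subst; rewrite h2_zero in Hh; lra).
  assert (HQ1 : Qs <> 1/2) by (intro E; subst; rewrite h2_half in Hh; lra).
  assert (HQs : 0 < Qs < 1/2) by lra.
  assert (HwN : w0 ^ N <= 1 - 2 * Qs).
  { assert (ln (w0 ^ N) <= ln (1 - 2 * Qs)).
    { rewrite ln_pow by lra.
      apply (Rmult_le_compat_r (- ln w0)) in HN; [|lra].
      unfold Rdiv in HN. replace (ln (1 - 2 * Qs) * / ln w0 * - ln w0) with (- ln (1 - 2*Qs)) in HN
        by (field; lra). lra. }
    destruct (Rle_or_lt (w0 ^ N) (1 - 2 * Qs)) as [|Hc]; auto.
    apply ln_increasing in Hc; [lra|lra]. }
  assert (HE : 0 <= Ew_e2e N l T F <= w0 ^ N).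
  { unfold Ew_e2e. apply E_geo_bound.
    - intros p Hp. unfold edge_probs in Hp. apply in_map_iff in Hp.
      destruct Hp as [j [Hj Hin]]. apply in_seq in Hin. subst p.
      assert (0 <= l j) by (apply Hl; lia).
      unfold p_edge, alpha_att. split.
      + unfold Rpower; apply exp_pos.
      + rewrite <- (Rpower_O 10) by lra. apply Rle_Rpower; [lra|].
        assert (0 <= 2/10 * l j) by (apply Rmult_le_pos; lra). lra.
    - intro xs. unfold w_e2e, w0_of. fold w0.
      assert (0 <= w0 ^ N) by (apply pow_le; lra).
      edestruct prodR_bound as [P1 P2]; [|split; [apply Rmult_le_pos; [lra|exact P1]|]].
      + intro i. split; [apply Rlt_le, exp_pos|].
        rewrite <- exp_0. 
        destruct (Rle_lt_or_eq _ _ (Rabs_pos (t_att N l * INR (nth (S i) xs 0%nat)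
                              - t_att N l * INR (nth i xs 0%nat)))) as [Ha|Ha].
        * apply Rlt_le, exp_increasing. unfold Rdiv.
          assert (0 < Rabs (t_att N l * INR (nth (S i) xs 0%nat)
                              - t_att N l * INR (nth i xs 0%nat)) * / T)
            by (apply Rmult_lt_0_compat; [lra| apply Rinv_0_lt_compat; lra]). lra.
        * rewrite <- Ha. right. f_equal. unfold Rdiv; ring.
      + rewrite <- (Rmult_1_r (w0 ^ N)) at 2. apply Rmult_le_compat_l; lra. }
  assert (Hh2 : 1/2 <= h2 (QBER N l T F)).
  { unfold QBER. set (Q := (1 - Ew_e2e N l T F) / 2).
    assert (Qs <= Q <= 1/2) by (unfold Q; lra).
    destruct (Rle_lt_or_eq _ _ (proj2 H)) as [H2|H2].
    - destruct (Rle_lt_or_eq _ _ (proj1 H)) as [H1|H1].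
      + left. rewrite <- Hh. apply h2_incr; lra.
      + rewrite <- H1; lra.
    - rewrite H2, h2_half; lra. }
  unfold SKR, SKF. rewrite Rmax_left by lra. ring.
Qed.
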